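(* Let $G$ be a query graph that is splittable and f-closed. Then for every sink $C\in\mathrm{Eq}$, $C^+=C^{\oplus}$.
   Context: $G=G[Q]$ is the query graph of a Boolean CQ without self-joins with atoms $R(u,v)$, $u\ne v$, first attribute the key: vertices are variables, each atom gives an edge $e_R=(u_R,v_R)$, consistent/inconsistent according to the type of $R$; $E^i$ = inconsistent edges. Paths may have zero edges. $x\to y$: a directed path with only consistent edges; $x\leadsto y$: any directed path; undirected paths ignore directions. For a path $P$ and vertex set $N$, $P\cap N$ is the set of vertices of $P$ in $N$. $u^{\oplus}=\{v:u\to v\}$, $u^+=\{v:u\leadsto v\}$, $u^{+,R}=\{v: u\leadsto v$ in $G-\{e_R\}\}$. For $R,S\in E^i$: $R\sim S$ iff $u_S\in u_R^+$ and $u_R\in u_S^+$; $[R]$ the class of $R$; $coupled^+(R)=[R]\cup\{S\in E^i:\exists$ undirected path $P$ from $v_R$ to $u_S$ with $P\cap u_R^{+,R}=\emptyset\}$; $G$ is splittable if there are no $R,S\in E^i$ with $R\in coupled^+(S)$, $S\in coupled^+(R)$ and $R\not\sim S$. $\mathrm{Eq}$ is the set of $\sim$-classes of $E^i$; for $C\in\mathrm{Eq}$, $C^{\oplus}=\bigcap_{R\in C}u_R^{\oplus}$ and $C^+=\bigcap_{R\in C}u_R^{+,R}$. $C_1<^{\oplus}C_2$ iff $C_1\ne C_2$ and some $S\in C_2$ has $u_S\in C_1^{\oplus}$; a sink is a maximal element of $<^{\oplus}$. $G$ is f-closed if for every $R\in E^i$, $v_R^{\oplus}\cap u_R^{+,R}\subseteq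 u_R^{\oplus}$. *)

(* Defs.v *)
(* Query graph of a self-join-free Boolean CQ with binary atoms. *)
From mathcomp Require Import all_boot.
Unset Printing Implicit Defensive.

Section QueryGraph.
(* V : variables (vertices); A : atoms (one per relation name, no self-joins).
   Atom R gives the directed edge e_R = (u R, v R); inc R means R is inconsistent. *)
Variables (V A : finType) (u v : A -> V) (inc : pred A).

Definition estep (P : pred A) : rel V :=
  fun x y => [exists R, [&& P R, u R == x & v R == y]].

Definition creach (x y : V) : bool := connect (estep (fun R => ~~ inc R)) x y.
Definition reach (x y : V) : bool := connect (estep predT) x y.
Definition reach_wo (R : A) (x y : V) : bool := connect (estep (fun S => S != R)) x y.

Definition oplus (x : V) : {set V} := [set y | creach x y].
Definition plus (x : V) : {set V} := [set y | reach x y].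
Definition plusR (R : A) : {set V} := [set y | reach_wo R (u R) y].

(* R ~ S (intended for R, S in E^i) *)
Definition sim (R S : A) : bool := (u S \in plus (u R)) && (u R \in plus (u S)).

Definition upath_avoid (N : {set V}) (x y : V) : bool :=
  (x \notin N) &&
  connect (fun a b => [&& a \notin N, b \notin N & estep predT a b || estep predT b a]) x y.

Definition coupled (R S : A) : bool :=
  inc S && (sim R S || upath_avoid (plusR R) (v R) (u S)).

Definition splittable : Prop :=
  forall R S, inc R -> inc S -> coupled R S -> coupled S R -> sim R S.

Definition f_closed : Prop :=
  forall R, inc R ->
  (oplus (v R) :&: plusR R) \subset oplus (u R).

Definition is_class (C : {set A}) : Prop :=
  exists2 R, inc R & C = [set S | inc S && sim R S].

Definition Coplus (C : {set A}) : {set V} := \bigcap_(R in C) oplus (u R).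
Definition Cplus (C : {set A}) : {set V} := \bigcap_(R in C) plusR R.

Definition ltC (C1 C2 : {set A}) : Prop :=
  C1 != C2 /\ exists2 S, S \in C2 & u S \in Coplus C1.

Definition is_sink (C : {set A}) : Prop :=
  is_class C /\ ~ (exists2 C2, is_class C2 & ltC C C2).

End QueryGraph.

(* Main.v *)
Require Import Defs.
From mathcomp Require Import all_boot.

Section Proof.
Local Set Implicit Arguments.
Variables (V A : finType) (u v : A -> V) (inc : pred A).

Local Notation es := (estep V A u v).
Local Notation cr := (creach V A u v inc).

Lemma esP (P : pred A) x y :
  reflect (exists2 T, P T & (u T = x /\ v T = y)) (es P x y).
Proof.
apply: (iffP existsP) => [[T /and3P [hP /eqP h1 /eqP h2]]|[T hP [h1 h2]]].
  by exists T.
by exists T; rewrite hP h1 h2 !eqxx.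
Qed.

Lemma es_sub (P Q : pred A) : (forall T, P T -> Q T) -> forall x y,
  connect (es P) x y -> connect (es Q) x y.
Proof.
move=> hPQ; apply: connect_sub => x y /esP [T hP [h1 h2]].
by apply: connect1; apply/esP; exists T => //; apply: hPQ.
Qed.

Lemma es1 (P : pred A) T : P T -> connect (es P) (u T) (v T).
Proof. by move=> hP; apply: connect1; apply/esP; exists T. Qed.

Lemma closed_conn (e : rel V) (N : {set V}) :
  (forall z w, z \in N -> e z w -> w \in N) ->
  forall a b, connect e a b -> a \in N -> b \in N.
Proof.
move=> hN a b /connectP [p hp ->]; elim: p a hp => [|c p IH] a //= /andP [hac hp] ha.
by apply: IH => //; apply: hN ha hac.
Qed.

Lemma conn_avoid (e : rel V) (N : {set V}) :
  (forall z w, z \in N -> e z w -> w \in N) ->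
  forall a b, connect e a b -> b \notin N ->
  (a \notin N) && connect (fun p q => [&& p \notin N, q \notin N & e p q]) a b.
Proof.
move=> hN a b /connectP [p hp ->]; elim: p a hp => [|c p IH] a /=.
  by move=> _ hb; rewrite hb connect0.
move=> /andP [hac hp] hb.
have /andP [hc hcon] := IH c hp hb.
have ha : a \notin N by apply/negP => ha; move/negP: hc; apply; apply: hN ha hac.
rewrite ha /=; apply: connect_trans hcon; apply: connect1; by rewrite ha hc hac.
Qed.

Lemma entry (P : pred A) x a p :
  path (es P) a p -> cr (last a p) x -> ~~ cr a x ->
  exists S q, [/\ P S, inc S, path (es P) a q, last a q = u S & size q < size p]
    /\ [/\ ~~ cr (u S) x, cr (v S) x & connect (es P) (v S) (last a p)].
Proof.
elim: p a => [|c p IH] a /=; first by move=> _ ->.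
move=> /andP [hac hp] hl hna.
case: (boolP (cr c x)) => hc.
  move/esP: hac => [T hP [h1 h2]].
  have hT : inc T.
    apply/negPn/negP => hT; move/negP: hna; apply.
    apply: connect_trans hc; rewrite -h1 -h2; exact: es1.
  exists T, [::]; split; first by split.
  by rewrite h1 h2 hna hc; split => //; apply/connectP; exists p.
have [S [q [[h1 h2 h3 h4 h5] h6]]] := IH c hp hl hc.
exists S, (c :: q); split => //; split => //=; by rewrite hac.
Qed.


Lemma split_conn R a b : connect (es predT) a b ->
  connect (es (fun S => S != R)) a b \/ connect (es (fun S => S != R)) (v R) b.
Proof.
move=> /connectP [p hp ->]; elim: p a hp => [|c p IH] a /=.
  by move=> _; left; apply: connect0.
move=> /andP [hac hp]; case: (IH c hp) => [h|h]; last by right.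
move/esP: hac => [T _ [h1 h2]].
case: (eqVneq T R) => [eTR|nTR].
  by subst T; right; rewrite h2.
by left; apply: connect_trans h; rewrite -h1 -h2; apply: es1.
Qed.

Lemma remove_conn (P : pred A) S a b : connect (es P) a b ->
  ~~ connect (es P) a (u S) ->
  connect (es (fun T => P T && (T != S))) a b.
Proof.
move=> /connectP [p hp ->]; elim: p a hp => [|c p IH] a /=.
  by move=> _ _; apply: connect0.
move=> /andP [hac hp] hn.
have hc : ~~ connect (es P) c (u S).
  apply/negP => hc; move/negP: hn; apply; apply: connect_trans hc.
  exact: connect1.
apply: connect_trans (IH c hp hc).
move/esP: hac => [T hT [h1 h2]].
case: (eqVneq T S) => [eTS|nTS].
  by move/negP: hn; case; rewrite -h1 eTS connect0.
by apply: connect1; apply/esP; exists T; rewrite ?hT ?nTS.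
Qed.

Lemma simE R S : sim V A u v R S =
  reach V A u v (u R) (u S) && reach V A u v (u S) (u R).
Proof. by rewrite /sim /plus !inE. Qed.

Lemma sim_refl R : sim V A u v R R.
Proof. by rewrite simE /reach connect0. Qed.

Lemma sim_sym {R S} : sim V A u v R S -> sim V A u v S R.
Proof. by rewrite !simE andbC. Qed.

Lemma sim_trans {R S T} : sim V A u v R S -> sim V A u v S T -> sim V A u v R T.
Proof.
rewrite !simE /reach => /andP [h1 h2] /andP [h3 h4].
by rewrite (connect_trans h1 h3) (connect_trans h4 h2).
Qed.

Definition Urel (N : {set V}) : rel V :=
  fun a b => [&& a \notin N, b \notin N & es predT a b || es predT b a].

Lemma Urel_sym N : symmetric (Urel N).
Proof.
move=> a b; rewrite /Urel.
by case: (a \in N); case: (b \in N) => //=; rewrite orbC.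
Qed.

Lemma to_up (P : pred A) (N : {set V}) a b :
  (forall z w, z \in N -> es P z w -> w \in N) ->
  connect (es P) a b -> b \notin N -> (a \notin N) && connect (Urel N) a b.
Proof.
move=> hN hab hb; have /andP [ha hc] := @conn_avoid _ _ hN _ _ hab hb.
rewrite ha /=; apply: connect_sub hc => p q /and3P [h1 h2 h3].
apply: connect1; rewrite /Urel h1 h2 /=; apply/orP; left.
by move/esP: h3 => [T _ [e1 e2]]; apply/esP; exists T.
Qed.

Lemma plusR_closed R z w : z \in plusR V A u v R ->
  es (fun S => S != R) z w -> w \in plusR V A u v R.
Proof.
rewrite !inE /reach_wo => hz hzw; apply: connect_trans hz _; exact: connect1.
Qed.

Section Class.
Variables (C : {set A}) (R0 : A).
Hypothesis hR0 : inc R0.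
Hypothesis hC : C = [set S | inc S && sim V A u v R0 S].

Lemma class_inc R : R \in C -> inc R.
Proof. by rewrite hC inE => /andP []. Qed.

Lemma class_sim R S : R \in C -> S \in C -> sim V A u v R S.
Proof.
rewrite hC !inE => /andP [_ h1] /andP [_ h2].
exact: sim_trans (sim_sym h1) h2.
Qed.

Lemma class_mem R S : R \in C -> inc S -> sim V A u v R S -> S \in C.
Proof.
move=> hR hS hRS; move: (hR); rewrite hC !inE hS /= => /andP [_ h].
exact: sim_trans h hRS.
Qed.

Lemma reach_class R S : R \in C -> S \in C -> connect (es predT) (u R) (u S).
Proof. by move=> hR hS; move: (class_sim hR hS); rewrite simE => /andP []. Qed.

Lemma Cplus_mem x R : x \in Cplus V A u v C -> R \in C -> x \in plusR V A u v R.
Proof. by move/bigcapP; apply. Qed.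

Hypothesis hfc : f_closed V A u v inc.

Lemma fc_use S x : inc S -> cr (v S) x -> x \in plusR V A u v S -> cr (u S) x.
Proof.
move=> hS h1 h2; have := subsetP (hfc hS) x.
by rewrite !inE h1 => H; apply: H; move: h2; rewrite inE.
Qed.

Lemma lemL x R : x \in Cplus V A u v C -> R \in C -> cr (u R) x ->
  forall R', R' \in C -> cr (u R') x.
Proof.
move=> hx hR hxR R' hR'; apply/negPn/negP => hn.
move/connectP: (reach_class hR' hR) => [p hp hl].
have := @entry predT x (u R') p hp; rewrite -hl => /(_ hxR hn).
move=> [S [q [[_ hS hq hlq _] [h1 h2 h3]]]].
have hSC : S \in C.
  apply: (class_mem hR' hS); rewrite simE /reach; apply/andP; split.
    by rewrite -hlq; apply/connectP; exists q.
  apply: connect_trans (reach_class hR hR'); apply: connect_trans h3.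
  exact: es1.
by move/negP: h1; apply; apply: fc_use => //; apply: Cplus_mem hSC.
Qed.

Lemma sink_mem S : ~ (exists2 C2, is_class V A u v inc C2 & ltC V A u v inc C C2) ->
  inc S -> u S \in Coplus V A u v inc C -> S \in C.
Proof.
move=> hns hS hSo.
set C2 := [set T | inc T && sim V A u v S T].
case: (eqVneq C C2) => [e|ne].
  by rewrite e inE hS sim_refl.
exfalso; apply: hns; exists C2; first by exists S.
by split => //; exists S => //; rewrite inE hS sim_refl.
Qed.

Hypothesis hsplit : splittable V A u v inc.
Hypothesis hns : ~ (exists2 C2, is_class V A u v inc C2 & ltC V A u v inc C C2).

Lemma main_ind R : R \in C -> forall n p, size p <= n ->
  path (es (fun S => S != R)) (u R) p ->
  last (u R) p \in Cplus V A u v C -> cr (u R) (last (u R) p).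
Proof.
move=> hR; elim=> [|n IH] p.
  by case: p => //= _ _ _; apply: connect0.
move=> hsz hp hy; apply/negPn/negP => hn.
have [S [q [[hSR hS hq hlq hsq] [h1 h2 h3]]]] :=
  @entry _ (last (u R) p) _ p hp (connect0 _ _) hn.
set y := last (u R) p in hy hn h1 h2 h3.
have hyS : y \notin plusR V A u v S.
  by apply/negP => hyS; move/negP: h1; apply; apply: fc_use.
have hSC : S \notin C.
  by apply/negP => hSC; move/negP: hyS; apply; apply: Cplus_mem hy hSC.
have huS : connect (es predT) (u R) (u S).
  apply: (@es_sub (fun S => S != R) predT) => //; rewrite -hlq.
  by apply/connectP; exists q.
case: (boolP [exists R', (R' \in C) && (u S \notin plusR V A u v R')]).
  move=> /existsP [R' /andP [hR' hnR']].
  have hcon : connect (es predT) (u R') (u S) :=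
    connect_trans (reach_class hR' hR) huS.
  have c1 : coupled V A u v inc R' S.
    rewrite /coupled hS /=; apply/orP; right.
    case: (@split_conn R' _ _ hcon) => h.
      by move/negP: hnR'; case; rewrite inE.
    exact: (@to_up (fun S => S != R') _ _ _ (@plusR_closed R') h hnR').
  have c2 : coupled V A u v inc S R'.
    rewrite /coupled (class_inc hR') /=; apply/orP; right.
    have hvy : cr (v S) y := h2.
    have hsub : forall T, ~~ inc T -> T != S.
      by move=> T hT; apply/eqP => e; move: hT; rewrite e hS.
    have A1 := @to_up _ (plusR V A u v S) _ _ (@plusR_closed S)
      (@es_sub (fun T => ~~ inc T) (fun T => T != S) hsub _ _ hvy) hyS.
    have hRy : connect (es (fun T => T != R')) (u R') y.
      by move: (Cplus_mem hy hR'); rewrite inE.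
    have hnc : ~~ connect (es (fun T => T != R')) (u R') (u S).
      by move: hnR'; rewrite inE.
    have A2 := @to_up _ (plusR V A u v S) _ _ (@plusR_closed S)
      (@es_sub (fun T => (T != R') && (T != S)) (fun T => T != S)
        (fun T => fun hT => proj2 (andP hT)) _ _ (@remove_conn _ S _ _ hRy hnc)) hyS.
    move/andP: A1 => [hv1 hc1]; move/andP: A2 => [_ hc2].
    rewrite /upath_avoid hv1 /=; apply: connect_trans hc1 _.
    by rewrite (sym_connect_sym (@Urel_sym _)).
  have := hsplit (class_inc hR') hS c1 c2 => hsim.
  by move/negP: hSC; apply; apply: class_mem hR' hS hsim.
move=> hall.
have hUS : u S \in Cplus V A u v C.
  apply/bigcapP => R' hR'; move/existsPn: hall => /(_ R').
  by rewrite hR' /= negbK.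
have hq' : size q <= n by rewrite -ltnS; apply: leq_trans hsq hsz.
have := IH q hq' hq; rewrite hlq => /(_ hUS) hRS.
have hSo : u S \in Coplus V A u v inc C.
  apply/bigcapP => R' hR'; rewrite inE; exact: lemL hUS hR hRS R' hR'.
by move/negP: hSC; apply; apply: sink_mem.
Qed.

End Class.

End Proof.

Theorem proposition5p5 (V A : finType) (u v : A -> V) (inc : pred A)
  (huv : forall R, u R != v R)
  (hsplit : splittable V A u v inc) (hfc : f_closed V A u v inc) :
  forall C : {set A}, is_sink V A u v inc C -> Cplus V A u v C = Coplus V A u v inc C.
Proof.
move=> C [[R0 hR0 hC] hns].
have hR0C : R0 \in C by rewrite hC inE hR0 (sim_refl V A u v).
apply/setP => y; apply/idP/idP => hy.
  have hyR : y \in plusR V A u v R0 := Cplus_mem hy hR0C.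
  move: hyR; rewrite inE /reach_wo => /connectP [p hp hl].
  have := main_ind R0 hC hfc hsplit hns hR0C (size p) p (leqnn _) hp.
  rewrite -hl => /(_ hy) hc.
  apply/bigcapP => R' hR'; rewrite inE.
  exact: (lemL R0 hC hfc hy hR0C hc hR').
apply/bigcapP => R hR; move/bigcapP: hy => /(_ R hR); rewrite !inE /reach_wo.
apply: (es_sub V A u v) => T hT; apply/eqP => e; move: hT; rewrite e.
by rewrite (class_inc V u v inc R0 hC hR).
Qed.
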